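(* Let $k$ be a positive integer and let $\varepsilon>0$. Every finite graph $G$ with treewidth less than $k$ is a minor of some finite graph $\tilde G$ with growth $f_{\tilde G}(r)\leq (162(k+1)+\varepsilon)r+1$ for every positive integer $r$.
   Context: The growth of a finite graph $G$ is the function $f_G\colon\mathbb{N}\to\mathbb{N}$ where $f_G(r)$ is the maximum of $|V(H)|$ over all subgraphs $H$ of $G$ of radius at most $r$. Treewidth is the minimum, over tree-decompositions (bags indexed by the nodes of a tree, each edge contained in some bag, the bags containing any given vertex forming a non-empty subtree), of the maximum bag size minus $1$. A graph $H$ is a minor of $G$ if $H$ is isomorphic to a graph obtained from a subgraph of $G$ by contracting edges. *)

(* Defs.v *)
From HB Require Import structures.
From mathcomp Require Import all_boot all_order all_algebra.
From mathcomp Require Import reals.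
Set Implicit Arguments. Unset Strict Implicit. Unset Printing Implicit Defensive.
Import Order.TTheory GRing.Theory Num.Theory.

Record sgraph := SGraph {
  vert : finType;
  adj : rel vert;
  adj_sym : symmetric adj;
  adj_irr : irreflexive adj }.

Definition ball (T : finType) (F : {set T * T}) (c : T) (r : nat) : {set T} :=
  iter r (fun B => B :|: [set y | [exists x in B, (x, y) \in F]]) [set c].

(* S is the vertex set of a subgraph H of G (edge set F) of radius <= r:
   F is a symmetric set of edges of G with both ends in S, and some centre
   c in S reaches every vertex of S by an F-path of length <= r. *)
Definition radius_le_set (G : sgraph) (S : {set vert G}) (r : nat) : bool :=
  [exists F : {set vert G * vert G},
    [forall p in F, [&& p.1 \in S, p.2 \in S, adj p.1 p.2 & (p.2, p.1) \in F]]
    && [exists c in S, S \subset ball F c r]].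

Definition growth (G : sgraph) (r : nat) : nat :=
  \max_(S : {set vert G} | radius_le_set S r) #|S|.

Definition is_tree (I : finType) (t : rel I) : Prop :=
  [/\ symmetric t, irreflexive t, (0 < #|I|)%N,
      (forall i j : I, connect t i j) &
      (forall p : seq I, (3 <= size p)%N -> uniq p -> ~~ cycle t p)].

Definition is_tree_decomposition (G : sgraph) (I : finType) (t : rel I)
    (B : I -> {set vert G}) : Prop :=
  [/\ is_tree t,
      (forall x y : vert G, adj x y -> exists i, (x \in B i) && (y \in B i)) &
      (forall v : vert G,
         (exists i, v \in B i) /\
         (forall i j, v \in B i -> v \in B j ->
            connect [rel a b | [&& t a b, v \in B a & v \in B b]] i j))].

Definition td_width (G : sgraph) (I : finType) (B : I -> {set vert G}) : int :=
  ((\max_(i : I) #|B i|)%:Z - 1)%R.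

Definition treewidth_lt (G : sgraph) (k : nat) : Prop :=
  exists (I : finType) (t : rel I) (B : I -> {set vert G}),
    is_tree_decomposition t B /\ (td_width B < k%:Z)%R.

Definition is_minor (H G : sgraph) : Prop :=
  exists phi : vert H -> {set vert G},
    [/\ (forall v, phi v != set0),
        (forall v, forall x y, x \in phi v -> y \in phi v ->
           connect [rel a b | [&& adj a b, a \in phi v & b \in phi v]] x y),
        (forall u v, u != v -> [disjoint phi u & phi v]) &
        (forall u v, adj u v ->
           exists x y, [/\ x \in phi u, y \in phi v & adj x y])].

(* Main.v *)
Require Import Defs.
From HB Require Import structures.
From mathcomp Require Import all_boot all_order all_algebra.
From mathcomp Require Import reals.
From mathcomp Require Import zify.
Set Implicit Arguments. Unset Strict Implicit. Unset Printing Implicit Defensive.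

Module G2.

Lemma card_bigcup_le (T I : finType) (P : pred I) (A : I -> {set T}) :
  #|\bigcup_(i | P i) A i| <= \sum_(i | P i) #|A i|.
Proof.
elim/big_rec2: _ => [|i n U _ IH]; first by rewrite cards0.
by rewrite (leq_trans (leq_card_setU _ _).1) // leq_add2l.
Qed.

Section Host.
Variables (I : finType) (rho : I) (parT : I -> I) (lev : I -> nat) (rk : I -> nat) (n : nat).
Hypothesis levP : forall c, c != rho -> lev c < lev (parT c).
Hypothesis rk_inj : injective rk.
Hypothesis rk_lt : forall c, rk c < n.

Definition Sf p := n.+1 * p.+1 + 1.
Definition Lf p := Sf p + n * p.
Definition Zf p := Lf p + Sf p.
Fixpoint e l := match l with 0 => 2 * Lf 0 | l'.+1 => 2 * Lf (e l') end.
Definition pe l := if l is l'.+1 then e l' else 0.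
Lemma eE l : e l = 2 * Lf (pe l). Proof. by case: l. Qed.
Lemma e_mono l l' : l <= l' -> e l <= e l'.
Proof.
elim: l' => [|l' IH]; first by rewrite leqn0 => /eqP ->.
rewrite leq_eqVlt ltnS => /orP [/eqP -> //|/IH H].
apply: (leq_trans H) => /=; rewrite /Lf /Sf; nia.
Qed.

Definition Zl i := Zf (pe (lev i)).
Definition Pc c := Lf (pe (lev (parT c))) + (rk c).+1 * (pe (lev (parT c))).+1.
Lemma Pc_lt c : Pc c < Zl (parT c).
Proof. rewrite /Pc /Zl /Zf /Sf; have := rk_lt c; nia. Qed.
Lemma Pc_ge c : Lf (pe (lev (parT c))) < Pc c.
Proof. rewrite /Pc; nia. Qed.

Definition M' := \max_i Zl i.
Definition M := M'.+1.
Definition V := (I * 'I_M)%type.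
Lemma Zl_lt i : Zl i < M.
Proof. by rewrite ltnS; apply: leq_bigmax. Qed.

Definition parH (x : V) : V :=
  if Zl x.1 <= x.2 then x
  else if x.2 == 0 :> nat then (if x.1 == rho then x else (parT x.1, inord (Pc x.1)))
  else (x.1, inord (x.2).-1).

Definition Desc (a : V) (s : nat) : {set V} :=
  [set y | [exists j : 'I_s.+1, iter j parH y == a]].

Lemma Desc_mono (a : V) s s' : s <= s' -> Desc a s \subset Desc a s'.
Proof.
move=> ss'; apply/subsetP => y; rewrite !inE => /existsP [j Hj].
have Hj' : j < s'.+1 by rewrite (leq_trans (ltn_ord j)) // ltnS.
by apply/existsP; exists (Ordinal Hj').
Qed.

Lemma Desc_self (a : V) s : a \in Desc a s.
Proof. by rewrite inE; apply/existsP; exists ord0. Qed.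

Lemma Desc_par (a : V) s (y : V) : parH y \in Desc a s -> y \in Desc a s.+1.
Proof.
rewrite !inE => /existsP [j Hj].
have Hj' : j.+1 < s.+2 by rewrite ltnS.
by apply/existsP; exists (Ordinal Hj'); rewrite -[iter _ _ _]/(iter j.+1 parH y) iterSr.
Qed.

Lemma Pc_ltM c : Pc c < M.
Proof. exact: ltn_trans (Pc_lt c) (Zl_lt _). Qed.

Lemma parH_cases (y : V) : parH y != y ->
  (y.1 = (parH y).1 /\ (y.2 : nat) = (parH y).2.+1 /\ y.2 < Zl y.1) \/
  ((y.2 : nat) = 0 /\ y.1 != rho /\ parT y.1 = (parH y).1 /\ ((parH y).2 : nat) = Pc y.1).
Proof.
rewrite /parH; case: ifP => [_|hz]; first by rewrite eqxx.
case: ifP => [/eqP h0 | h0].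
  case: ifP => [_|hr]; first by rewrite eqxx.
  by move=> _; right; rewrite /= inordK ?Pc_ltM // hr.
move=> _; left; rewrite /= inordK; last by have := ltn_ord y.2; rewrite /M; lia.
split=> //; split; last by rewrite ltnNge hz.
by rewrite prednK // lt0n h0.
Qed.

Lemma parH_fix_or (y : V) : parH y = y \/ parH y != y.
Proof. by case: (parH y =P y); [left|right]. Qed.

Definition Zn (a : V) s := [set y : V | [&& y.1 == a.1, a.2 <= y.2 <= a.2 + s & y.2 < Zl a.1]].
Definition W (a : V) s := [set c | [&& c != rho, parT c == a.1 & a.2 <= Pc c < a.2 + s]].
Definition RHS (a : V) s := Zn a s :|: \bigcup_(c in W a s) Desc (c, ord0) (s - (Pc c - a.2).+1).

Lemma RHS_step (a : V) s : RHS a s \subset RHS a s.+1.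
Proof.
apply/subsetP => y; rewrite !inE => /orP [|/bigcupP [c]].
  by move=> /and3P [-> /andP [-> h] ->]; rewrite (leq_trans h) ?leq_add2l.
rewrite inE => /and3P [h1 h2 /andP [h3 h4]] hy.
apply/orP; right; apply/bigcupP; exists c.
  by rewrite inE h1 h2 h3 (leq_trans h4) // addnS.
apply: (subsetP (Desc_mono _ _)) hy; lia.
Qed.

Lemma RHS_mono (a : V) s s' : s <= s' -> RHS a s \subset RHS a s'.
Proof.
move/subnK <-; elim: (s' - s) => [|d IH]; first by rewrite add0n.
by rewrite (subset_trans IH) // addSn RHS_step.
Qed.

Lemma Desc_RHS (a : V) s : a.2 < Zl a.1 -> Desc a s \subset RHS a s.
Proof.
move=> ha.
suff H : forall j y, iter j parH y = a -> y \in RHS a j.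
  apply/subsetP => y; rewrite inE => /existsP [j /eqP /H hy].
  by apply: (subsetP (RHS_mono _ _)) hy; rewrite -ltnS.
elim=> [|j IH] y.
  by move=> /= ->; rewrite !inE eqxx leqnn leq_addr ha.
rewrite iterSr => /IH hp.
case: (parH_fix_or y) => [hf|hne].
  by apply: (subsetP (RHS_step _ _)); rewrite -hf.
case/setUP: hp => [|/bigcupP [c]].
  rewrite inE => /and3P [/eqP h1 /andP [h2 h3] h4].
  case: (parH_cases hne) => [[e1 [e2 e3]]|[e1 [e2 [e3 e4]]]].
    apply/setUP; left; rewrite inE e1 h1 eqxx /= e2 (leq_trans h2) //=.
    by rewrite addnS ltnS h3 -h1 -e1 -e2.
  apply/setUP; right; apply/bigcupP; exists y.1.
    by rewrite inE e2 e3 h1 eqxx /= -e4 h2 addnS ltnS h3.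
  rewrite (surjective_pairing y) (_ : y.2 = ord0); first exact: Desc_self. exact: val_inj.
rewrite inE => /and3P [h1 h2 /andP [h3 h4]] hy.
apply/setUP; right; apply/bigcupP; exists c.
  by rewrite inE h1 h2 h3 (leq_trans h4) // addnS.
have -> : j.+1 - (Pc c - a.2).+1 = (j - (Pc c - a.2).+1).+1 by lia.
exact: Desc_par.
Qed.

Lemma card_strip (i : I) lo hi :
  #|[set y : V | [&& y.1 == i, lo <= y.2 & y.2 < hi]]| <= hi - lo.
Proof.
apply: (leq_trans (subset_leq_card (B := [set ((i, inord (lo + k)) : V) | k : 'I_(hi - lo)]) _)).
  apply/subsetP => -[y1 y2]; rewrite inE /= => /and3P [/eqP h1 h2 h3].
  have hk : y2 - lo < hi - lo by lia.
  apply/imsetP; exists (Ordinal hk) => //=.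
  by rewrite subnKC // inord_val -h1.
by rewrite (leq_trans (leq_imset_card _ _)) ?card_ord.
Qed.

Lemma card_Zn (a : V) s : #|Zn a s| <= s.+1.
Proof.
apply: (@leq_trans ((a.2 + s).+1 - a.2)); last by lia.
apply: leq_trans (card_strip a.1 a.2 (a.2 + s).+1).
by apply: subset_leq_card; apply/subsetP => y; rewrite !inE => /and3P [-> /andP [-> h] _]; rewrite ltnS.
Qed.

Lemma card_Zn' (a : V) s : #|Zn a s| <= Zl a.1.
Proof.
apply: (@leq_trans (Zl a.1 - 0)); first apply: leq_trans (card_strip a.1 0 (Zl a.1)).
  2: by rewrite subn0.
by apply: subset_leq_card; apply/subsetP => y; rewrite !inE => /and3P [-> _ ->].
Qed.

Lemma card_RHS (a : V) s : #|RHS a s| <=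
  #|Zn a s| + \sum_(c in W a s) #|Desc (c, ord0) (s - (Pc c - a.2).+1)|.
Proof.
by rewrite (leq_trans (leq_card_setU _ _).1) // leq_add2l card_bigcup_le.
Qed.

Lemma card_I : #|I| <= n.
Proof.
have /leq_card : injective (fun c => Ordinal (rk_lt c)).
  by move=> x y [] /rk_inj.
by rewrite card_ord.
Qed.

Lemma Zl_gt0 i : 0 < Zl i.
Proof. rewrite /Zl /Zf /Lf /Sf; lia. Qed.

Lemma W_parT (a : V) s c : c \in W a s -> parT c = a.1 /\ c != rho.
Proof. by rewrite inE => /and3P [h /eqP -> _]. Qed.

Lemma Tot_bound L : forall i s, lev i <= L -> #|Desc (i, ord0) s| <= e (lev i).
Proof.
elim: L => [|L IH] i s hl.
  rewrite (leq_trans (subset_leq_card (Desc_RHS _ _))) ?Zl_gt0 //.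
  rewrite (leq_trans (card_RHS _ _)) //= big_pred0; first by rewrite addn0 eE (leq_trans (card_Zn' _ _)) // /Zl /Zf /Lf /=; lia.
  move=> c; apply/negP => /W_parT [/= hp /levP]; rewrite hp; lia.
rewrite (leq_trans (subset_leq_card (Desc_RHS _ _))) ?Zl_gt0 //.
rewrite (leq_trans (card_RHS _ _)) //=.
apply: (@leq_trans (Zl i + \sum_(c in W (i, ord0) s) pe (lev i))).
  rewrite leq_add ?card_Zn' // leq_sum // => c /W_parT [/= hp /levP].
  rewrite hp; move: hl; case: (lev i) => [|l] //= hl hc.
  apply: (leq_trans (IH c _ _)); first lia.
  apply: e_mono; lia.
rewrite sum_nat_const eE /Zl /Zf /Lf.
have : #|W (i, ord0) s| <= n by rewrite (leq_trans (max_card _)) // card_I.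
nia.
Qed.

Lemma Tot i s : #|Desc (i, ord0) s| <= e (lev i).
Proof. exact: Tot_bound (leqnn _). Qed.

Lemma A_bound c s : #|Desc (c, ord0) s| <= (2 * s).+1.
Proof.
case: (leqP s (Lf (pe (lev c)))) => hs; last first.
  by rewrite (leq_trans (Tot _ _)) // eE; lia.
rewrite (leq_trans (subset_leq_card (Desc_RHS _ _))) ?Zl_gt0 //.
rewrite (leq_trans (card_RHS _ _)) //= big_pred0.
  by rewrite addn0 (leq_trans (card_Zn _ _)) //; lia.
move=> d; apply/negP; rewrite inE /= => /and3P [_ /eqP hp h].
by have := Pc_ge d; rewrite hp; lia.
Qed.

Lemma parH_nj (y : V) : y.2 < Zl y.1 -> (parH y).2 < Zl (parH y).1.
Proof.
move=> hy; case: (parH_fix_or y) => [-> //|hne].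
case: (parH_cases hne) => [[e1 [e2 e3]]|[e1 [e2 [e3 e4]]]].
  by rewrite -e1; lia.
by rewrite e4 -e3 Pc_lt.
Qed.

Lemma iter_nj j (y : V) : y.2 < Zl y.1 -> (iter j parH y).2 < Zl (iter j parH y).1.
Proof. by elim: j => [|j IH] //= hy; apply: parH_nj; apply: IH. Qed.

Lemma junk_Desc (a : V) s : Zl a.1 <= a.2 -> Desc a s \subset [set a].
Proof.
move=> ha; apply/subsetP => y; rewrite !inE => /existsP [j /eqP hj].
case: (leqP (Zl y.1) y.2) => hy.
  have hf : parH y = y by rewrite /parH hy.
  have : iter j parH y = y by elim: (nat_of_ord j) => [|k IH] //=; rewrite IH hf.
  by move=> h; rewrite -hj h.
by have := iter_nj j hy; rewrite hj ltnNge ha.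
Qed.

Lemma quot_lt (a : V) s c c' : c \in W a s -> c' \in W a s -> rk c < rk c' ->
  (Pc c - a.2) %/ (pe (lev a.1)).+1 < (Pc c' - a.2) %/ (pe (lev a.1)).+1.
Proof.
rewrite !inE => /and3P [_ /eqP h1 /andP [h2 h3]] /and3P [_ /eqP h1' /andP [h2' h3']] hr.
set g := (pe (lev a.1)).+1.
have hg : (Pc c - a.2) + g <= Pc c' - a.2.
  move: h2 h2'; rewrite /Pc h1 h1' -/g; nia.
rewrite (leq_trans _ (leq_div2r g hg)) // divnDr ?dvdnn // divnn /g; lia.
Qed.

Lemma card_W (a : V) s : #|W a s| <= (s.-1 %/ (pe (lev a.1)).+1).+1.
Proof.
set g := (pe (lev a.1)).+1; set q := s.-1 %/ g.
pose f c : 'I_q.+1 := inord ((Pc c - a.2) %/ g).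
have hq c : c \in W a s -> (Pc c - a.2) %/ g <= q.
  rewrite inE => /and3P [_ _ /andP [h2 h3]]; apply: leq_div2r; lia.
have := @leq_card_in _ _ f (W a s); rewrite card_ord; apply.
move=> c c' hc hc' /(congr1 val); rewrite /f /= !inordK ?ltnS ?hq // => hcc.
apply: rk_inj; case: (ltngtP (rk c) (rk c')) => // hr.
  by have := quot_lt hc hc' hr; rewrite -/g hcc ltnn.
by have := quot_lt hc' hc hr; rewrite -/g hcc ltnn.
Qed.

Lemma arith_B s p w : w <= (s.-1 %/ p.+1).+1 -> s.+1 + w * minn (2 * s).-1 p <= 4 * s + 1.
Proof.
set q := s.-1 %/ p.+1 => hw.
have hq : q * p.+1 <= s.-1 by apply: leq_divM.
have m1 : w * minn (2 * s).-1 p <= w * (2 * s).-1 by rewrite leq_mul2l geq_minl orbT.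
have m2 : w * minn (2 * s).-1 p <= w * p by rewrite leq_mul2l geq_minr orbT.
case: q hw hq => [|q] hw hq.
  have : w * (2 * s).-1 <= (2 * s).-1 by rewrite -[X in _ <= X]mul1n leq_mul2r hw orbT.
  lia.
have : w * p <= q.+2 * p by rewrite leq_mul2r hw orbT.
nia.
Qed.

Lemma B_bound (a : V) s : #|Desc a s| <= 4 * s + 1.
Proof.
case: (leqP (Zl a.1) a.2) => ha.
  by rewrite (leq_trans (subset_leq_card (junk_Desc s ha))) // cards1; lia.
rewrite (leq_trans (subset_leq_card (Desc_RHS _ ha))) //.
rewrite (leq_trans (card_RHS _ _)) //.
apply: (@leq_trans (s.+1 + \sum_(c in W a s) minn (2 * s).-1 (pe (lev a.1)))).
  rewrite leq_add ?card_Zn // leq_sum // => c hc; rewrite leq_min; apply/andP; split.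
    rewrite (leq_trans (A_bound _ _)) //; move: hc; rewrite inE => /and3P [_ _ /andP [h2 h3]]; lia.
  move/W_parT: hc => [hp /levP]; rewrite hp; case: (lev a.1) => [|l] //= hc.
  by rewrite (leq_trans (Tot _ _)) // e_mono // -ltnS.
by rewrite sum_nat_const arith_B // card_W.
Qed.

End Host.

End G2.

Module T.

Section Rooted.
Variables (I : finType) (t : rel I) (rho : I).
Hypothesis t_sym : symmetric t.
Hypothesis t_irr : irreflexive t.
Hypothesis t_conn : forall i, connect t rho i.
Hypothesis t_acyc : forall p : seq I, 3 <= size p -> uniq p -> ~~ cycle t p.

Definition Rch n := iter n (fun B : {set I} => B :|: [set y | [exists x in B, t x y]]) [set rho].

Lemma Rch_step n x y : x \in Rch n -> t x y -> y \in Rch n.+1.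
Proof.
by move=> hx hxy; rewrite /= inE; apply/orP; right; rewrite inE; apply/existsP; exists x; rewrite hx.
Qed.

Lemma Rch_path p : forall x n, x \in Rch n -> path t x p -> last x p \in Rch (n + size p).
Proof.
elim: p => [|y p IH] x n hx /=; first by rewrite addn0.
move=> /andP [hxy hp]; rewrite addnS -addSn; apply: IH => //; exact: Rch_step hxy.
Qed.

Lemma Rch_ex i : exists n, i \in Rch n.
Proof.
have /connectP [p hp ->] := t_conn i.
by exists (0 + size p); apply: Rch_path; rewrite //= inE.
Qed.

Definition dep i := ex_minn (Rch_ex i).

Lemma dep_in i : i \in Rch (dep i).
Proof. by rewrite /dep; case: ex_minnP. Qed.

Lemma dep_min i n : i \in Rch n -> dep i <= n.
Proof. by rewrite /dep; case: ex_minnP => m _ H /H. Qed.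

Lemma dep_rho : dep rho = 0.
Proof. by apply/eqP; rewrite -leqn0 dep_min //= inE. Qed.

Lemma dep0 i : dep i = 0 -> i = rho.
Proof. by move=> h; have := dep_in i; rewrite h /= inE => /eqP. Qed.

Lemma dep_edge a b : t a b -> dep b <= (dep a).+1.
Proof. by move=> hab; apply: dep_min; apply: Rch_step (dep_in a) hab. Qed.

Lemma dep_par_ex i d : dep i = d.+1 -> exists x, t x i && (dep x == d).
Proof.
move=> hd; have := dep_in i; rewrite hd /= inE => /orP [/dep_min|].
  by rewrite hd ltnn.
rewrite inE => /existsP [x /andP [hx hxi]]; exists x; rewrite hxi /=.
have := dep_min hx; have := dep_edge hxi; rewrite hd; lia.
Qed.

Definition par i := if i == rho then rho else odflt i [pick x | t x i && (dep x == (dep i).-1)].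

Lemma par_rho : par rho = rho.
Proof. by rewrite /par eqxx. Qed.

Lemma par_spec i : i != rho -> [/\ t (par i) i, dep (par i) = (dep i).-1 & 0 < dep i].
Proof.
move=> hi; have hd : 0 < dep i by rewrite lt0n; apply/eqP => /dep0 /eqP; rewrite (negbTE hi).
rewrite /par (negbTE hi); case: pickP => [x /andP [h1 /eqP h2] | h] /=; first by [].
have := @dep_par_ex i (dep i).-1; rewrite prednK // => /(_ erefl) [x hx].
by have := h x; rewrite /= hx.
Qed.

Lemma two_paths d : forall u w, dep u = d -> dep w = d -> u != w ->
  exists s, [/\ uniq (u :: s), path t u s, last u s = w, 2 <= size s &
              all (fun x => dep x <= d) s].
Proof.
elim: d => [|d IH] u w hu hw huw.
  by move: huw; rewrite (dep0 hu) (dep0 hw) eqxx.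
have hur : u != rho by apply/eqP => hr; move: hu; rewrite hr dep_rho.
have hwr : w != rho by apply/eqP => hr; move: hw; rewrite hr dep_rho.
have [tu du _] := par_spec hur; have [tw dw _] := par_spec hwr.
rewrite hu /= in du; rewrite hw /= in dw.
case: (eqVneq (par u) (par w)) => hpp.
  exists [:: par u; w]; split => //=.
  - rewrite !inE negb_or huw andbT.
    have h1 : u != par u by apply/eqP => h; move: du; rewrite -h hu; lia.
    have h2 : par u != w by apply/eqP => h; move: du; rewrite h hw; lia.
    by rewrite h1 h2.
  - by rewrite t_sym tu hpp tw.
  - by rewrite du hw; lia.
have [s [us ps ls ss als]] := IH _ _ du dw hpp.
exists (par u :: rcons s w); split.
- have hnu : u \notin par u :: s.
    apply/negP; rewrite inE => /orP [/eqP h|h]; first by move: du; rewrite -h hu; lia.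
    by move/allP: als => /(_ u h); rewrite hu; lia.
  have hnw : w \notin par u :: s.
    apply/negP; rewrite inE => /orP [/eqP h|h]; first by move: du; rewrite -h hw; lia.
    by move/allP: als => /(_ w h); rewrite hw; lia.
  rewrite -!rcons_cons rcons_uniq; apply/andP; split; last by rewrite cons_uniq hnu us.
  by rewrite inE negb_or eq_sym huw hnw.
- by rewrite /= t_sym tu /= rcons_path ps ls tw.
- by rewrite /= last_rcons.
- by rewrite /= size_rcons.
- rewrite /= du leqnSn /= all_rcons hw leqnn /=.
  by apply/allP => x /(allP als) h; lia.
Qed.

Lemma edge_par a b : t a b -> a = par b \/ b = par a.
Proof.
wlog hle : a b / dep a <= dep b.
  move=> H hab; case: (leqP (dep a) (dep b)) => h; first exact: H.
  by rewrite t_sym in hab; case: (H b a (ltnW h) hab) => ?; [right|left].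
move=> hab; case: (eqVneq a (par b)) => [->|hab1]; first by left.
case: (eqVneq b (par a)) => [->|hba1]; first by right.
exfalso.
have hb1 := dep_edge hab.
case: (eqVneq (dep a) (dep b)) => hd.
  have hne : a != b by apply/eqP => h; move: hab; rewrite h t_irr.
  have [s [us ps ls ss als]] := two_paths hd erefl hne.
  have := t_acyc (p := a :: s); rewrite [size _]/= ltnS ss => /(_ erefl us).
  by rewrite /= rcons_path ps ls t_sym hab.
have hdb : dep b = (dep a).+1 by lia.
have hbr : b != rho by apply/eqP => hr; move: hdb; rewrite hr dep_rho.
have [tb db _] := par_spec hbr.
rewrite hdb /= in db.
have [s [us ps ls ss als]] := two_paths (esym db) erefl hab1.
have hnb : b \notin a :: s.
  apply/negP; rewrite inE => /orP [/eqP h|h]; first by move: hdb; rewrite h; lia.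
  by move/allP: als => /(_ b h); rewrite hdb; lia.
have := t_acyc (p := a :: rcons s b).
rewrite [size _]/= size_rcons ltnS ltnW // -rcons_cons rcons_uniq hnb us => /(_ erefl erefl).
rewrite /=.
have hba : t b a by rewrite t_sym.
by rewrite !rcons_path last_rcons ps ls tb hba.
Qed.

Definition hgt := \max_i dep i.
Definition lev i := hgt - dep i.

Lemma levP c : c != rho -> lev c < lev (par c).
Proof.
move=> hc; have [_ dp hd] := par_spec hc.
have : dep c <= hgt by apply: leq_bigmax.
rewrite /lev dp; lia.
Qed.

Lemma par_neq c : c != rho -> par c != c.
Proof. by move=> hc; have [_ dp hd] := par_spec hc; apply/eqP => h; move: dp; rewrite h; lia. Qed.

End Rooted.

End T.

Import G2 T.
Import Order.TTheory GRing.Theory Num.Theory.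

Section Prod.
Variables (V : finType) (f : V -> V) (k : nat).
Definition PV := (V * 'I_k)%type.
Definition adjP : rel PV := fun x y =>
  ((x.1 != y.1) && ((f x.1 == y.1) || (f y.1 == x.1))) || ((x.1 == y.1) && (x.2 != y.2)).
Lemma adjP_sym : symmetric adjP.
Proof. by move=> x y; rewrite /adjP [y.1 == x.1]eq_sym [y.2 == x.2]eq_sym [(f y.1 == _) || _]orbC. Qed.
Lemma adjP_irr : irreflexive adjP.
Proof. by move=> x; rewrite /adjP !eqxx. Qed.
Definition Gt := SGraph adjP_sym adjP_irr.

Definition DescF (a : V) s : {set V} := [set y | [exists j : 'I_s.+1, iter j f y == a]].

Lemma ball_Desc (F : {set PV * PV}) (c : PV) :
  (forall p, p \in F -> adjP p.1 p.2) ->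
  forall i, ball F c i \subset [set y : PV | y.1 \in DescF (iter i f c.1) (2 * i)].
Proof.
move=> hF; elim=> [|i IH].
  by apply/subsetP => y; rewrite /= !inE => /eqP ->; apply/existsP; exists ord0.
apply/subsetP => y; rewrite /ball /= -/(ball F c i) inE => /orP [/(subsetP IH)|].
  rewrite !inE => /existsP [j /eqP hj]; apply/existsP.
  have hj' : j.+1 < (2 * i.+1).+1 by have := ltn_ord j; lia.
  by exists (Ordinal hj'); rewrite -[iter _ _ _]/(iter j.+1 f y.1) /= hj.
rewrite inE => /existsP [x /andP [/(subsetP IH) hx /hF /= hxy]].
move: hx; rewrite !inE => /existsP [j /eqP hj]; apply/existsP.
move: hxy; rewrite /adjP => /orP [/andP [_ /orP [/eqP e|/eqP e]]|/andP [/eqP e _]].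
- have hj' : j < (2 * i.+1).+1 by have := ltn_ord j; lia.
  by exists (Ordinal hj'); rewrite /= -e -iterSr iterS hj.
- have hj' : j.+2 < (2 * i.+1).+1 by have := ltn_ord j; lia.
  by exists (Ordinal hj'); rewrite -[iter _ _ _]/(iter j.+2 f y.1) iterSr e iterS hj.
- have hj' : j.+1 < (2 * i.+1).+1 by have := ltn_ord j; lia.
  by exists (Ordinal hj'); rewrite -[iter _ _ _]/(iter j.+1 f y.1) -e iterS hj.
Qed.

Lemma growth_Gt r (D : nat) : (forall a, #|DescF a (2 * r)| <= D) -> growth Gt r <= D * k.
Proof.
move=> hD; apply/bigmax_leqP => S /existsP [F /andP [/forallP hF /existsP [c /andP [_ hS]]]].
have hF' : forall p, p \in F -> adjP p.1 p.2.
  by move=> p hp; have := hF p; rewrite hp => /and4P [].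
apply: (leq_trans (subset_leq_card (subset_trans hS (ball_Desc c hF' r)))).
have -> : [set y : PV | y.1 \in DescF (iter r f c.1) (2 * r)] = setX (DescF (iter r f c.1) (2 * r)) setT.
  by apply/setP => y; rewrite !inE andbT.
by rewrite cardsX cardsT card_ord leq_mul2r hD orbT.
Qed.
End Prod.

Lemma connect_lift (T1 T2 : finType) (e1 : rel T1) (e2 : rel T2) (g : T1 -> T2) :
  (forall a b, e1 a b -> connect e2 (g a) (g b)) ->
  forall a b, connect e1 a b -> connect e2 (g a) (g b).
Proof.
move=> he a b /connectP [p hp ->]; elim: p a hp => [|x p IH] a /=; first by rewrite connect0.
by move=> /andP [hax hp]; apply: connect_trans (he _ _ hax) (IH _ hp).
Qed.

Section Minor.
Variables (G : sgraph) (I : finType) (t : rel I) (B : I -> {set vert G}) (k' : nat) (rho : I).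
Hypothesis t_sym : symmetric t.
Hypothesis t_irr : irreflexive t.
Hypothesis t_conn : forall i, connect t rho i.
Hypothesis t_acyc : forall p : seq I, (3 <= size p)%N -> uniq p -> ~~ cycle t p.
Hypothesis hedge : forall x y : vert G, adj x y -> exists i, (x \in B i) && (y \in B i).
Hypothesis hsub : forall v : vert G,
  (exists i, v \in B i) /\
  (forall i j, v \in B i -> v \in B j ->
     connect [rel a b | [&& t a b, v \in B a & v \in B b]] i j).
Hypothesis hbag : forall i, #|B i| <= k'.+1.

Definition parT := par t_conn.
Definition levT := lev t_conn.
Definition rkT (c : I) : nat := enum_rank c.
Definition nT := #|I|.
Lemma levT_P c : c != rho -> levT c < levT (parT c). Proof. exact: levP. Qed.
Lemma rkT_inj : injective rkT. Proof. by move=> x y /val_inj /enum_rank_inj. Qed.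
Lemma rkT_lt c : rkT c < nT. Proof. exact: ltn_ord. Qed.

Definition VT := G2.V levT nT.
Definition fT : VT -> VT := @parH _ rho parT levT rkT nT.
Definition GT := Gt fT k'.+1.

Definition rk_in i (v : vert G) : 'I_k'.+1 := inord (index v (enum (B i))).

Lemma rk_in_inj i u v : u \in B i -> v \in B i -> rk_in i u = rk_in i v -> u = v.
Proof.
move=> hu hv /(congr1 val); rewrite /rk_in /= !inordK; last first.
- by rewrite (leq_trans _ (hbag i)) // cardE index_mem mem_enum.
- by rewrite (leq_trans _ (hbag i)) // cardE index_mem mem_enum.
move=> h; have hu1 : u \in enum (B i) by rewrite mem_enum.
have hv1 : v \in enum (B i) by rewrite mem_enum.
by rewrite -(nth_index u hu1) h (nth_index u hv1).
Qed.

Definition phi (v : vert G) : {set PV VT k'.+1} :=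
  [set x : PV VT k'.+1 | [exists i, [&& v \in B i, x.1.1 == i, x.1.2 < Zl levT nT i & x.2 == rk_in i v]]].

Definition canon v i : PV VT k'.+1 := ((i, ord0), rk_in i v).

Lemma canon_in v i : v \in B i -> canon v i \in phi v.
Proof.
move=> hv; rewrite inE; apply/existsP; exists i; by rewrite hv !eqxx /= ?Zl_gt0.
Qed.

Definition Rv v : rel (PV VT k'.+1) := [rel a b | [&& adjP fT a b, a \in phi v & b \in phi v]].

Lemma Rv_sym v : connect_sym (Rv v).
Proof.
apply: sym_connect_sym => x y; rewrite /Rv /= (adjP_sym fT x y); congr andb; exact: andbC.
Qed.

Lemma inord0M : (inord 0 : 'I_(G2.M levT nT)) = ord0.
Proof. by apply: val_inj; rewrite /= inordK. Qed.

Lemma phi_mem v i (m : 'I_(G2.M levT nT)) r : v \in B i -> m < Zl levT nT i -> r = rk_in i v ->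
  ((i, m), r) \in phi v.
Proof. by move=> hv hm ->; rewrite inE; apply/existsP; exists i; rewrite hv eqxx hm eqxx. Qed.

Lemma zone_conn v i r : v \in B i -> r = rk_in i v -> forall m, m < Zl levT nT i ->
  connect (Rv v) ((i, inord m), r) (canon v i).
Proof.
move=> hv hr; elim=> [|m IH] hm; first by rewrite inord0M hr connect0.
have hM : m.+1 < G2.M levT nT by apply: ltn_trans hm (Zl_lt _ _ _).
apply: connect_trans (IH (ltnW hm)); apply: connect1.
have h1 : ((i, inord m.+1), r) \in phi v by apply: phi_mem => //; rewrite inordK.
have h2 : ((i, inord m), r) \in phi v by apply: phi_mem => //; rewrite inordK ?(ltnW hM) //; exact: ltnW.
rewrite /Rv /= h1 h2 !andbT.
rewrite /adjP /= /fT /parH /= inordK //.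
rewrite leqNgt hm /=.
have hne : (i, inord m.+1) != (i, inord m) :> VT.
  apply/eqP => -[] /(congr1 val); rewrite /= !inordK //; [lia | exact: ltnW].
by rewrite hne eqxx.
Qed.

Lemma lift_par v a b : a = parT b -> t a b -> v \in B a -> v \in B b ->
  connect (Rv v) (canon v b) (canon v a).
Proof.
move=> hab tab hva hvb.
have hbr : b != rho.
  apply/eqP => hb; move: tab; rewrite hab hb /parT par_rho t_irr //.
have hPc := Pc_lt parT levT rkT_lt b.
have hPM := Pc_ltM parT levT rkT_lt b.
rewrite -/parT -hab in hPc.
apply: connect_trans (zone_conn hva erefl hPc); apply: connect1.
have h2 : ((a, inord (Pc parT levT rkT nT b)), rk_in a v) \in phi v.
  by apply: phi_mem => //; rewrite inordK.
rewrite /Rv /= canon_in // h2 andbT /adjP /= /fT /parH /=.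
have hne : (b, ord0) != (a, inord (Pc parT levT rkT nT b)) :> VT.
  by apply/eqP => -[] hba; move: tab; rewrite hba t_irr.
by rewrite (negbTE hbr) -/parT -hab eqxx hne.
Qed.

Lemma lift_edge v a b : t a b -> v \in B a -> v \in B b ->
  connect (Rv v) (canon v a) (canon v b).
Proof.
move=> tab hva hvb; case: (edge_par t_sym t_irr t_conn t_acyc tab) => h.
  by rewrite Rv_sym; apply: lift_par.
by apply: lift_par => //; rewrite t_sym.
Qed.

Lemma phi_canon v x : x \in phi v -> exists i, v \in B i /\ connect (Rv v) x (canon v i).
Proof.
rewrite inE => /existsP [i /and4P [hv /eqP h1 h2 /eqP h3]].
exists i; split => //.
have -> : x = ((i, inord x.1.2), rk_in i v).
  by case: x h1 h2 h3 => [[x1 x2] x3] /= -> h2 ->; rewrite inord_val.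
by apply: zone_conn => //; rewrite -h1.
Qed.

Lemma phi_conn v x y : x \in phi v -> y \in phi v -> connect (Rv v) x y.
Proof.
move=> /phi_canon [i [hi cx]] /phi_canon [j [hj cy]].
apply: connect_trans cx _; rewrite Rv_sym; apply: connect_trans cy _; rewrite Rv_sym.
apply: (connect_lift (e1 := [rel a b | [&& t a b, v \in B a & v \in B b]]) (g := canon v)).
  by move=> a b /and3P [tab ha hb]; apply: lift_edge.
exact: (hsub v).2.
Qed.

Lemma minor_GT : is_minor G GT.
Proof.
exists phi; split.
- move=> v; have [[i hi] _] := hsub v; apply/set0Pn; exists (canon v i); exact: canon_in.
- move=> v x y hx hy; exact: phi_conn.
- move=> u v huv; rewrite -setI_eq0; apply/eqP/setP => x; rewrite !inE.
  apply/negP => /andP [/existsP [i /and4P [hu /eqP h1 _ /eqP h3]] /existsP [j /and4P [hv /eqP h1' _ /eqP h3']]].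
  move: h1'; rewrite h1 => hij; subst j.
  by move: huv; rewrite (rk_in_inj hu hv (etrans (esym h3) h3')) eqxx.
- move=> u v huv; have [i /andP [hu hv]] := hedge huv.
  exists (canon u i), (canon v i); split; try exact: canon_in.
  rewrite /= /adjP /= eqxx /=; apply/eqP => /(rk_in_inj hu hv) huv'.
  by move: huv; rewrite huv' (adj_irr (s := G)).
Qed.

Lemma growth_GT r : growth GT r <= (4 * (2 * r) + 1) * k'.+1.
Proof.
apply: growth_Gt => a; exact: (B_bound levT_P rkT_inj rkT_lt a (2 * r)).
Qed.

End Minor.

From mathcomp Require Import lra.

Theorem corollary18 (R : realType) (k : nat) (eps : R) :
  (0 < k)%N -> (0 < eps)%R ->
  forall G : sgraph, treewidth_lt G k ->
  exists Gt : sgraph, is_minor G Gt /\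
    (forall r : nat, (0 < r)%N ->
       ((growth Gt r)%:R <= (162 * (k.+1)%:R + eps) * r%:R + 1 :> R)%R).
Proof.
case: k => [//|k'] _ heps G [I [t [B [[[t_sym t_irr hI t_conn' t_acyc] hedge hsub] hw]]]].
have /card_gt0P [rho _] := hI.
have t_conn : forall i, connect t rho i by move=> i; exact: t_conn'.
have hbag : forall i, #|B i| <= k'.+1.
  move=> i; have : \max_i #|B i| <= k'.+1 by move: hw; rewrite /td_width; lia.
  exact: leq_trans (leq_bigmax (F := fun i => #|B i|) i).
exists (GT k' t_conn); split.
  exact: (minor_GT (B := B) t_sym t_irr t_conn t_acyc hedge hsub hbag).
move=> r hr.
have hn : (growth (GT k' t_conn) r <= 162 * k'.+2 * r)%N.
  by rewrite (leq_trans (growth_GT k' t_conn r)) //; nia.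
apply: (@le_trans _ _ (((162 * k'.+2 * r)%N)%:R)%R); first by rewrite ler_nat.
rewrite !natrM.
have : (0 <= eps * r%:R)%R by rewrite mulr_ge0 // ltW.
lra.
Qed.
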